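(* Let $v_\lambda(k)$ ($|k|<\Lambda$, $\lambda\in\{1,2\}$) be nonzero complex coefficients and $w\ge0$ an integrable function on $\mathbb{R}^3$, $\widehat w(k)=\int e^{ik\cdot x}w(x)\,dx$, such that for all complex families $f_\lambda(k)$ $$\sum_{|k|<\Lambda,\lambda}\frac{|f_\lambda(k)|^2}{|v_\lambda(k)|^2}\ \ge\ \sum_{|k|,|k'|<\Lambda,\ \lambda,\lambda'}\frac{1}{2V}\overline{f_\lambda(k)}\,f_{\lambda'}(k')\,\widehat w(k-k'),$$ and let $L(y)=\frac{1}{\sqrt{2V}}\sum_{|k|<\Lambda,\lambda}\sqrt{|k|}\,a_\lambda(k)\overline{v_\lambda(k)}e^{ik\cdot y}$. Then, with $c=\frac{1}{2V}\sum_{|k|<\Lambda,\lambda}|k|\,|v_\lambda(k)|^2$, both of the following hold as quadratic forms: $$H_f\ge -c\int w(y)\,dy+\frac14\int w(y)\big(L(y)+L^*(y)\big)^2dy,$$ $$H_f\ge -c\int w(y)\,dy-\frac14\int w(y)\big(L(y)-L^*(y)\big)^2dy.$$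
   Context: The radiation field lives in a box of side $L$, volume $V=L^3$; modes $k\in(2\pi/L)\mathbb{Z}^3$ with $|k|<\Lambda$, polarizations $\lambda\in\{1,2\}$. $\mathcal F$ is the photon Fock space with $[a_\lambda(k),a^*_{\lambda'}(k')]=\delta_{\lambda\lambda'}\delta(k,k')$, all other pairs commuting, and $H_f=\sum_{|k|<\Lambda}\sum_{\lambda}|k|\,a^*_\lambda(k)a_\lambda(k)$. *)

(* Defs.v *)
From HB Require Import structures.
From mathcomp Require Import all_boot all_order all_algebra.
From mathcomp Require Import complex.
From mathcomp Require Import all_classical all_reals all_analysis.
Set Implicit Arguments. Unset Strict Implicit. Unset Printing Implicit Defensive.
Import Order.TTheory GRing.Theory Num.Theory.
Local Open Scope ring_scope.

Section Photons.
Variable R : realType.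
Local Notation C := (R[i]).

Definition R3 := (R * R * R)%type.
Definition leb3 := ((@lebesgue_measure R \x @lebesgue_measure R)
                      \x @lebesgue_measure R)%E.

Definition dot3 (k y : R3) : R := k.1.1 * y.1.1 + k.1.2 * y.1.2 + k.2 * y.2.
Definition norm3 (k : R3) : R := Num.sqrt (dot3 k k).

Definition expi (t : R) : C := (cos t +i* sin t)%C.

Definition int3 (g : R3 -> R) : R := Rintegral leb3 setT g.

Definition fourier (w : R3 -> R) (k : R3) : C :=
  (int3 (fun x => cos (dot3 k x) * w x) +i* int3 (fun x => sin (dot3 k x) * w x))%C.

(** The box modes: k = (2 pi / L) n, n in Z^3, |k| < Lambda.  All such n have
    |n_i| <= M := trunc(Lambda L / (2 pi)); we enumerate [-M, M]^3 and filter. *)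
Definition kvec (L : R) (n : int * int * int) : R3 :=
  ((2 * pi / L) * n.1.1%:~R, (2 * pi / L) * n.1.2%:~R, (2 * pi / L) * n.2%:~R).

Definition box_range (L Lam : R) : seq int :=
  let M := Num.truncn (Lam * L / (2 * pi)) in
  [seq (x%:Z - M%:Z)%R | x <- iota 0 (M + M).+1].

Definition box_modes (L Lam : R) : seq (int * int * int) :=
  [seq n <- [seq (ab, c) | ab <- [seq (a, b) | a <- box_range L Lam,
                                     b <- box_range L Lam], c <- box_range L Lam]
     | norm3 (kvec L n) < Lam].

Definition nmodes (L Lam : R) : nat := size (box_modes L Lam).

(** Mode labels: (index of k in [box_modes], polarization in 'I_2 ~ {1,2}). *)
Definition mode (L Lam : R) := ('I_(nmodes L Lam) * 'I_2)%type.

Definition kmode (L Lam : R) (j : mode L Lam) : R3 :=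
  kvec L (nth (0, 0, 0)%R (box_modes L Lam) j.1).

(** Fock space: occupation-number configurations; a finite-particle vector is a
    function on configurations with finite support. Operators act pointwise. *)
Definition config (L Lam : R) := {ffun mode L Lam -> nat}.

Definition incr (L Lam : R) (n : config L Lam) (j : mode L Lam) : config L Lam :=
  [ffun m => (n m + (m == j))%N].
Definition decr (L Lam : R) (n : config L Lam) (j : mode L Lam) : config L Lam :=
  [ffun m => (n m - (m == j))%N].

Definition sqrtn (m : nat) : C := (Num.sqrt (m%:R : R))%:C%C.

Definition ann (L Lam : R) (j : mode L Lam) (phi : config L Lam -> C) :
  config L Lam -> C := fun n => sqrtn (n j).+1 * phi (incr n j).
Definition cre (L Lam : R) (j : mode L Lam) (phi : config L Lam -> C) :
  config L Lam -> C := fun n => sqrtn (n j) * phi (decr n j).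

Definition opadd (L Lam : R) (A B : (config L Lam -> C) -> config L Lam -> C) :=
  fun phi n => A phi n + B phi n.
Definition opsub (L Lam : R) (A B : (config L Lam -> C) -> config L Lam -> C) :=
  fun phi n => A phi n - B phi n.
Definition opsq (L Lam : R) (A : (config L Lam -> C) -> config L Lam -> C) :=
  fun phi => A (A phi).

Definition Hf (L Lam : R) (phi : config L Lam -> C) : config L Lam -> C :=
  fun n => \sum_(j : mode L Lam) (norm3 (kmode j))%:C%C * cre j (ann j phi) n.

Definition volume (L : R) : R := L ^+ 3.

Definition Lop (L Lam : R) (v : mode L Lam -> C) (y : R3)
  (phi : config L Lam -> C) : config L Lam -> C :=
  fun n => \sum_(j : mode L Lam)
     (Num.sqrt (norm3 (kmode j)) / Num.sqrt (2 * volume L))%:C%C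
       * (v j)^* * expi (dot3 (kmode j) y) * ann j phi n.
Definition Lstar (L Lam : R) (v : mode L Lam -> C) (y : R3)
  (phi : config L Lam -> C) : config L Lam -> C :=
  fun n => \sum_(j : mode L Lam)
     (Num.sqrt (norm3 (kmode j)) / Num.sqrt (2 * volume L))%:C%C
       * v j * (expi (dot3 (kmode j) y))^* * cre j phi n.

(** <psi, phi> for psi supported in the (duplicate-free) list s *)
Definition dotF (L Lam : R) (s : seq (config L Lam)) (psi phi : config L Lam -> C) : C :=
  \sum_(n <- s) (psi n)^* * phi n.

Definition supported_in (L Lam : R) (s : seq (config L Lam)) (psi : config L Lam -> C) :=
  uniq s /\ forall n, n \notin s -> psi n = 0.

End Photons.

(* Main.v *)
Require Import Defs.
From HB Require Import structures.
From mathcomp Require Import all_boot all_order all_algebra.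
From mathcomp Require Import complex.
From mathcomp Require Import all_classical all_reals all_analysis.
From mathcomp Require Import ring lra.
Import Order.TTheory GRing.Theory Num.Theory.
Local Open Scope ring_scope.
Set Implicit Arguments. Unset Strict Implicit. Unset Printing Implicit Defensive.

Section Cplx.
Variable R : realType.
Local Notation C := R[i].

Lemma ReD (x y : C) : complex.Re (x + y) = complex.Re x + complex.Re y.
Proof. by case: x; case: y. Qed.
Lemma ImD (x y : C) : complex.Im (x + y) = complex.Im x + complex.Im y.
Proof. by case: x; case: y. Qed.
Lemma ReB (x y : C) : complex.Re (x - y) = complex.Re x - complex.Re y.
Proof. by case: x; case: y. Qed.
Lemma ReN (x : C) : complex.Re (- x) = - complex.Re x.
Proof. by case: x. Qed.
Lemma ImN (x : C) : complex.Im (- x) = - complex.Im x.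
Proof. by case: x. Qed.
Lemma ImB (x y : C) : complex.Im (x - y) = complex.Im x - complex.Im y.
Proof. by case: x; case: y. Qed.
Lemma ReM (x y : C) : complex.Re (x * y) = complex.Re x * complex.Re y - complex.Im x * complex.Im y.
Proof. by case: x; case: y. Qed.
Lemma ImM (x y : C) : complex.Im (x * y) = complex.Re x * complex.Im y + complex.Im x * complex.Re y.
Proof. by case: x => a b; case: y => c d /=. Qed.
Lemma ReJ (x : C) : complex.Re (x^*) = complex.Re x.
Proof. by case: x. Qed.
Lemma ImJ (x : C) : complex.Im (x^*) = - complex.Im x.
Proof. by case: x. Qed.
Lemma Re_real (x : R) : complex.Re (x%:C%C) = x.
Proof. by []. Qed.
Lemma Im_real (x : R) : complex.Im (x%:C%C) = 0.
Proof. by []. Qed.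

Lemma Re_sum (I : Type) (r : seq I) (P : pred I) (F : I -> C) :
  complex.Re (\sum_(i <- r | P i) F i) = \sum_(i <- r | P i) complex.Re (F i).
Proof. exact: (big_morph _ ReD). Qed.
Lemma Im_sum (I : Type) (r : seq I) (P : pred I) (F : I -> C) :
  complex.Im (\sum_(i <- r | P i) F i) = \sum_(i <- r | P i) complex.Im (F i).
Proof. exact: (big_morph _ ImD). Qed.

Lemma Re_nrm_ge0 (x : C) : 0 <= complex.Re (x^* * x).
Proof. case: x => a b /=; nra. Qed.
Lemma Im_nrm (x : C) : complex.Im (x^* * x) = 0.
Proof. case: x => a b /=; ring. Qed.

Lemma expiJ (t : R) : expi t * (expi t)^* = 1.
Proof.
rewrite /expi; apply/eqP; rewrite eq_complex /=; apply/andP; split; apply/eqP.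
  by rewrite -(cos2Dsin2 t); ring.
by ring.
Qed.

Lemma conjR (x : R) : (x%:C%C : C)^* = x%:C%C.
Proof. exact: conjc_real. Qed.

Lemma Re_le (x y : C) : x <= y -> complex.Re x <= complex.Re y.
Proof. by rewrite lecE => /andP[]. Qed.

Lemma Re_natmul (k : nat) (x : C) : complex.Re (k%:R * x) = k%:R * complex.Re x.
Proof.
rewrite !mulr_natl; elim: k => [|k IH]; first by rewrite !mulr0n.
by rewrite !mulrS ReD IH.
Qed.

Lemma Re_nrm2 (x : C) : (complex.Re (`|x| ^+ 2))%:C%C = `|x| ^+ 2.
Proof. by rewrite normc_def -rmorphXn. Qed.

End Cplx.

Section Fock.
Variables (R : realType) (L Lam : R).
Local Notation C := R[i].
Local Notation M := (mode L Lam).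
Local Notation cf := (config L Lam).
Local Notation sq := (sqrtn R).

Lemma incrE (n : cf) j m : incr n j m = (n m + (m == j))%N.
Proof. by rewrite /incr ffunE. Qed.
Lemma decrE (n : cf) j m : decr n j m = (n m - (m == j))%N.
Proof. by rewrite /decr ffunE. Qed.

Lemma decr_incr (n : cf) j : decr (incr n j) j = n.
Proof. by apply/ffunP => m; rewrite decrE incrE addnK. Qed.

Lemma incr_decr (n : cf) j : (0 < n j)%N -> incr (decr n j) j = n.
Proof.
move=> h; apply/ffunP => m; rewrite incrE decrE.
case: eqP => [->|_]; last by rewrite subn0 addn0.
by rewrite subnK.
Qed.

Lemma incr_inj j : injective (fun n : cf => incr n j).
Proof. by move=> a b /(congr1 (fun n => decr n j)); rewrite !decr_incr. Qed.

Lemma incr_jj (n : cf) j : incr n j j = (n j).+1.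
Proof. by rewrite incrE eqxx addn1. Qed.
Lemma incr_jk (n : cf) j k : k != j -> incr n j k = n k.
Proof. by move=> /negbTE h; rewrite incrE h addn0. Qed.
Lemma decr_jk (n : cf) j k : k != j -> decr n j k = n k.
Proof. by move=> /negbTE h; rewrite decrE h subn0. Qed.

Lemma decr_incr_comm (n : cf) j j' : j != j' ->
  decr (incr n j) j' = incr (decr n j') j.
Proof.
move=> hjj; apply/ffunP => m; rewrite /incr /decr !ffunE.
case: (eqVneq m j) => [->|hmj]; first by rewrite (negbTE hjj) !subn0.
by rewrite !addn0.
Qed.

Lemma sqrtn0 : sq 0 = 0 :> C.
Proof. by rewrite /sqrtn sqrtr0. Qed.

Lemma sqrtn_conj m : (sq m)^* = sq m :> C.
Proof. exact: conjc_real. Qed.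

Lemma sqrtnM m : sq m * sq m = m%:R :> C.
Proof.
rewrite /sqrtn -rmorphM /= -expr2 sqr_sqrtr ?ler0n //.
by rewrite -[RHS](rmorph_nat (real_complex R)).
Qed.

Definition supp (t : seq cf) (phi : cf -> C) := forall n, n \notin t -> phi n = 0.

Lemma sum_indep (t1 t2 : seq cf) (F : cf -> C) : uniq t1 -> uniq t2 ->
  (forall x, x \notin t1 -> F x = 0) -> (forall x, x \notin t2 -> F x = 0) ->
  \sum_(x <- t1) F x = \sum_(x <- t2) F x.
Proof.
move=> u1 u2 h1 h2.
have e1 : \sum_(x <- t1) F x = \sum_(x <- t1 | x \in t2) F x.
  rewrite [RHS]big_mkcond /=; apply: eq_bigr => x _; case: ifP => // /negbT; exact: h2.
have e2 : \sum_(x <- t2) F x = \sum_(x <- t2 | x \in t1) F x.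
  rewrite [RHS]big_mkcond /=; apply: eq_bigr => x _; case: ifP => // /negbT; exact: h1.
rewrite e1 e2 -[LHS]big_filter -[RHS]big_filter; apply: perm_big; apply: uniq_perm; rewrite ?filter_uniq //.
by move=> x; rewrite !mem_filter andbC.
Qed.

Lemma ann_adj0 (t : seq cf) j (phi chi : cf -> C) :
  \sum_(n <- t) (phi n)^* * ann j chi n =
  \sum_(m <- map (fun n => incr n j) t) (cre j phi m)^* * chi m.
Proof.
rewrite big_map; apply: eq_bigr => n _.
rewrite /ann /cre incr_jj decr_incr rmorphM /= sqrtn_conj; ring.
Qed.

Lemma supp_ann t j phi : supp t phi -> supp (map (fun n => decr n j) t) (ann j phi).
Proof.
move=> h n hn; rewrite /ann h ?mulr0 //; apply: contra hn => hi.
by apply/mapP; exists (incr n j) => //; rewrite decr_incr.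
Qed.

Lemma supp_cre t j phi : supp t phi -> supp (map (fun n => incr n j) t) (cre j phi).
Proof.
move=> h n hn; rewrite /cre; case: (posnP (n j)) => [->|hp].
  by rewrite sqrtn0 mul0r.
rewrite h ?mulr0 //; apply: contra hn => hd.
by apply/mapP; exists (decr n j) => //; rewrite incr_decr.
Qed.

Lemma conj_swap (t : seq cf) (a b : cf -> C) :
  \sum_(n <- t) (a n)^* * b n = (\sum_(n <- t) (b n)^* * a n)^*.
Proof. by rewrite rmorph_sum; apply: eq_bigr => n _; rewrite rmorphM /= conjCK mulrC. Qed.

Lemma cre_adj t1 t2 j phi chi : uniq t1 -> supp t1 phi -> uniq t2 -> supp t2 chi ->
  \sum_(n <- t1) (phi n)^* * cre j chi n = \sum_(n <- t2) (ann j phi n)^* * chi n.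
Proof.
move=> u1 s1 u2 s2.
rewrite (@sum_indep t1 (map (fun n => incr n j) t2)) //.
- by rewrite conj_swap -ann_adj0 -conj_swap.
- by rewrite map_inj_uniq //; exact: incr_inj.
- by move=> x hx; rewrite s1 // conjC0 mul0r.
- by move=> x hx; rewrite (supp_cre s2) // mulr0.
Qed.

Variable v : M -> C.

Definition cc (j : M) : C :=
  (Num.sqrt (norm3 (kmode j)) / Num.sqrt (2 * volume L))%:C%C.
Definition beta (y : R3 R) (j : M) : C := cc j * (v j)^* * expi (dot3 (kmode j) y).

Lemma cc_conj j : (cc j)^* = cc j.
Proof. exact: conjc_real. Qed.

Lemma LopE y phi n : Lop v y phi n = \sum_j beta y j * ann j phi n.
Proof. by []. Qed.

Lemma LstarE y phi n : Lstar v y phi n = \sum_j (beta y j)^* * cre j phi n.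
Proof.
apply: eq_bigr => j _; rewrite /beta !rmorphM /= cc_conj conjCK.
by rewrite /cc rmorphM.
Qed.

Lemma Lstar_adj y t1 t2 phi chi : uniq t1 -> supp t1 phi -> uniq t2 -> supp t2 chi ->
  \sum_(n <- t1) (phi n)^* * Lstar v y chi n =
  \sum_(n <- t2) (Lop v y phi n)^* * chi n.
Proof.
move=> u1 s1 u2 s2.
transitivity (\sum_j (beta y j)^* * \sum_(n <- t1) (phi n)^* * cre j chi n).
  under eq_bigr do rewrite LstarE big_distrr /=.
  rewrite exchange_big /=; apply: eq_bigr => j _; rewrite big_distrr /=.
  by apply: eq_bigr => n _; ring.
transitivity (\sum_j (beta y j)^* * \sum_(n <- t2) (ann j phi n)^* * chi n).
  by apply: eq_bigr => j _; rewrite (cre_adj j u1 s1 u2 s2).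
under [RHS]eq_bigr do rewrite LopE rmorph_sum big_distrl /=.
rewrite [RHS]exchange_big /=; apply: eq_bigr => j _; rewrite big_distrr /=.
by apply: eq_bigr => n _; rewrite (rmorphM _ (beta y j) (ann j phi n)) /=; ring.
Qed.

Lemma Lop_adj y t1 t2 phi chi : uniq t1 -> supp t1 phi -> uniq t2 -> supp t2 chi ->
  \sum_(n <- t1) (phi n)^* * Lop v y chi n =
  \sum_(n <- t2) (Lstar v y phi n)^* * chi n.
Proof.
move=> u1 s1 u2 s2.
by rewrite conj_swap -(Lstar_adj y u2 s2 u1 s1) -conj_swap.
Qed.

Definition U (t : seq cf) : seq cf :=
  undup (flatten [seq map (fun n => incr n j) t ++ map (fun n => decr n j) t | j <- index_enum M]).

Lemma U_uniq t : uniq (U t).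
Proof. exact: undup_uniq. Qed.

Lemma inU_incr t j x : x \in map (fun n => incr n j) t -> x \in U t.
Proof.
move=> hx; rewrite mem_undup; apply/flattenP.
exists (map (fun n => incr n j) t ++ map (fun n => decr n j) t); last by rewrite mem_cat hx.
by apply/mapP; exists j; rewrite ?mem_index_enum.
Qed.

Lemma inU_decr t j x : x \in map (fun n => decr n j) t -> x \in U t.
Proof.
move=> hx; rewrite mem_undup; apply/flattenP.
exists (map (fun n => incr n j) t ++ map (fun n => decr n j) t); last by rewrite mem_cat hx orbT.
by apply/mapP; exists j; rewrite ?mem_index_enum.
Qed.

Lemma suppU_ann t j phi : supp t phi -> supp (U t) (ann j phi).
Proof.
move=> h n hn; apply: (supp_ann h); apply: contra hn; exact: inU_decr.
Qed.

Lemma suppU_cre t j phi : supp t phi -> supp (U t) (cre j phi).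
Proof.
move=> h n hn; apply: (supp_cre h); apply: contra hn; exact: inU_incr.
Qed.

Lemma suppU_Lop t y phi : supp t phi -> supp (U t) (Lop v y phi).
Proof.
move=> h n hn; rewrite LopE big1 // => j _; by rewrite (suppU_ann j h) // mulr0.
Qed.

Lemma suppU_Lstar t y phi : supp t phi -> supp (U t) (Lstar v y phi).
Proof.
move=> h n hn; rewrite LstarE big1 // => j _; by rewrite (suppU_cre j h) // mulr0.
Qed.

Lemma Lop_add y phi1 phi2 n :
  Lop v y (fun m => phi1 m + phi2 m) n = Lop v y phi1 n + Lop v y phi2 n.
Proof. rewrite !LopE -big_split; apply: eq_bigr => j _; rewrite /ann /=; ring. Qed.
Lemma Lop_sub y phi1 phi2 n :
  Lop v y (fun m => phi1 m - phi2 m) n = Lop v y phi1 n - Lop v y phi2 n.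
Proof. rewrite !LopE -sumrB; apply: eq_bigr => j _; rewrite /ann /=; ring. Qed.
Lemma Lstar_add y phi1 phi2 n :
  Lstar v y (fun m => phi1 m + phi2 m) n = Lstar v y phi1 n + Lstar v y phi2 n.
Proof. rewrite !LstarE -big_split; apply: eq_bigr => j _; rewrite /cre /=; ring. Qed.
Lemma Lstar_sub y phi1 phi2 n :
  Lstar v y (fun m => phi1 m - phi2 m) n = Lstar v y phi1 n - Lstar v y phi2 n.
Proof. rewrite !LstarE -sumrB; apply: eq_bigr => j _; rewrite /cre /=; ring. Qed.

Lemma ccr y psi n : Lop v y (Lstar v y psi) n =
  Lstar v y (Lop v y psi) n + (\sum_j beta y j * (beta y j)^*) * psi n.
Proof.
have e1 : Lop v y (Lstar v y psi) n = \sum_j \sum_j' beta y j * (beta y j')^* *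
   (sq (n j).+1 * sq (incr n j j')) * psi (decr (incr n j) j').
  rewrite LopE; apply: eq_bigr => j _; rewrite /ann LstarE !big_distrr /=.
  by apply: eq_bigr => j' _; rewrite /cre; ring.
have e2 : Lstar v y (Lop v y psi) n = \sum_j \sum_j' beta y j * (beta y j')^* *
   (sq (n j') * sq (decr n j' j).+1) * psi (incr (decr n j') j).
  rewrite LstarE.
  transitivity (\sum_j' \sum_j (beta y j')^* * (sq (n j') * (beta y j * ann j psi (decr n j')))).
    apply: eq_bigr => j' _; rewrite /cre LopE !big_distrr /=.
    by apply: eq_bigr => j _.
  rewrite exchange_big /=; apply: eq_bigr => j _; apply: eq_bigr => j' _.
  by rewrite /ann; ring.
rewrite e1 e2 big_distrl -big_split /=; apply: eq_bigr => j _.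
rewrite (bigD1 j) //= [in RHS](bigD1 j) //=.
have off : \sum_(j' | j' != j) beta y j * (beta y j')^* *
   (sq (n j).+1 * sq (incr n j j')) * psi (decr (incr n j) j') =
   \sum_(j' | j' != j) beta y j * (beta y j')^* *
   (sq (n j') * sq (decr n j' j).+1) * psi (incr (decr n j') j).
  apply: eq_bigr => j' hj'.
  have hjj : j != j' by rewrite eq_sym.
  rewrite (incr_jk n hj') (decr_jk n hjj) (decr_incr_comm n hjj); ring.
rewrite off addrAC; congr (_ + _).
rewrite incr_jj decr_incr sqrtnM.
case: (posnP (n j)) => [h0|hp].
  by rewrite h0 sqrtn0 mul0r mulr0 mul0r add0r mulr1.
rewrite decrE eqxx subn1 prednK // sqrtnM incr_decr //.
by rewrite -addn1 natrD; ring.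
Qed.


Lemma Re_sum_nrm_ge0 (t : seq cf) (F : cf -> C) : 0 <= complex.Re (\sum_(n <- t) (F n)^* * F n).
Proof. rewrite Re_sum; apply: sumr_ge0 => n _; exact: Re_nrm_ge0. Qed.
Lemma Im_sum_nrm (t : seq cf) (F : cf -> C) : complex.Im (\sum_(n <- t) (F n)^* * F n) = 0.
Proof. by rewrite Im_sum big1 // => n _; rewrite Im_nrm. Qed.

Lemma A_eq y s psi : uniq s -> supp s psi ->
  dotF s psi (opsq (opadd (Lop v y) (Lstar v y)) psi) =
  \sum_(n <- U s) (Lop v y psi n + Lstar v y psi n)^* * (Lop v y psi n + Lstar v y psi n).
Proof.
move=> us ss.
have sX : supp (U s) (fun n => Lop v y psi n + Lstar v y psi n).
  by move=> n hn; rewrite (suppU_Lop y ss) // (suppU_Lstar y ss) // addr0.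
rewrite /dotF /opsq /opadd.
under eq_bigr do rewrite mulrDr.
rewrite big_split /= (Lop_adj y us ss (U_uniq s) sX) (Lstar_adj y us ss (U_uniq s) sX).
rewrite -big_split /=; apply: eq_bigr => n _; rewrite rmorphD /=; ring.
Qed.

Lemma B_eq y s psi : uniq s -> supp s psi ->
  dotF s psi (opsq (opsub (Lop v y) (Lstar v y)) psi) =
  - \sum_(n <- U s) (Lop v y psi n - Lstar v y psi n)^* * (Lop v y psi n - Lstar v y psi n).
Proof.
move=> us ss.
have sX : supp (U s) (fun n => Lop v y psi n - Lstar v y psi n).
  by move=> n hn; rewrite (suppU_Lop y ss) // (suppU_Lstar y ss) // subr0.
rewrite /dotF /opsq /opsub.
under eq_bigr do rewrite mulrBr.
rewrite sumrB /= (Lop_adj y us ss (U_uniq s) sX) (Lstar_adj y us ss (U_uniq s) sX).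
rewrite -sumrB -sumrN /=; apply: eq_bigr => n _; rewrite rmorphB /=; ring.
Qed.

Definition cb y := \sum_j beta y j * (beta y j)^*.

Lemma AB_eq y s psi : uniq s -> supp s psi ->
  dotF s psi (opsq (opadd (Lop v y) (Lstar v y)) psi) -
  dotF s psi (opsq (opsub (Lop v y) (Lstar v y)) psi) =
  4%:R * \sum_(n <- U s) (Lop v y psi n)^* * Lop v y psi n + 2%:R * cb y * dotF s psi psi.
Proof.
move=> us ss.
have sL : supp (U s) (Lop v y psi) by exact: suppU_Lop.
rewrite -(Lstar_adj y us ss (U_uniq s) sL).
rewrite /dotF /opsq /opadd /opsub -sumrB.
rewrite (big_distrr (4%:R : C)) (big_distrr (2%:R * cb y)) -big_split /=.
apply: eq_bigr => n _.
rewrite Lop_add Lstar_add Lop_sub Lstar_sub ccr -/(cb y); ring.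
Qed.


Lemma beta_conj y j : (beta y j)^* = cc j * v j * (expi (dot3 (kmode j) y))^*.
Proof. by rewrite /beta !rmorphM /= cc_conj conjCK /cc rmorphM. Qed.

Lemma cb_eq (hL : 0 < L) y : cb y =
  ((2 * volume L)^-1 * \sum_j norm3 (kmode j) * complex.Re (`|v j| ^+ 2))%:C%C.
Proof.
have hV : 0 <= 2 * volume L by rewrite mulr_ge0 // /volume exprn_ge0 // ltW.
rewrite /cb rmorphM rmorph_sum big_distrr; apply: eq_bigr => j _.
rewrite beta_conj.
have -> : beta y j * (cc j * v j * (expi (dot3 (kmode j) y))^*) =
   (cc j * cc j) * (v j * (v j)^*) * (expi (dot3 (kmode j) y) * (expi (dot3 (kmode j) y))^*).
  by rewrite /beta; ring.
rewrite expiJ -normCK -(Re_nrm2 (v j)) mulr1.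
rewrite /cc -!rmorphM /= -expr2 expr_div_n !sqr_sqrtr //; last exact: sqrtr_ge0.
by rewrite -rmorphM /=; f_equal; ring.
Qed.

End Fock.

Section Ana.
Variable R : realType.
Local Notation C := R[i].
Local Notation mu := (@leb3 R).
Local Open Scope classical_set_scope.
Import measurable_realfun.

Definition good (F : R3 R -> C) :=
  [/\ measurable_fun setT (fun y => complex.Re (F y)),
      measurable_fun setT (fun y => complex.Im (F y)) &
      exists K : R, forall y, `|complex.Re (F y)| <= K /\ `|complex.Im (F y)| <= K].

Lemma good_ext F G : (forall y, F y = G y) -> good F -> good G.
Proof.
move=> e [h1 h2 [K hK]]; split.
- by apply: eq_measurable_fun h1 => y _; rewrite e.
- by apply: eq_measurable_fun h2 => y _; rewrite e.
- by exists K => y; rewrite -e.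
Qed.

Lemma good_cst (a : C) : good (fun _ => a).
Proof.
split; try exact: measurable_cst.
exists (`|complex.Re a| + `|complex.Im a|) => y; split.
  by rewrite lerDl.
by rewrite lerDr.
Qed.

Lemma good_bnd_ge0 (F : R3 R -> C) (K : R) : (forall y : R3 R, `|complex.Re (F y)| <= K /\ `|complex.Im (F y)| <= K) -> 0 <= K.
Proof. move=> /(_ (0, 0, 0)) [h _]; exact: le_trans h. Qed.

Lemma good_add F G : good F -> good G -> good (fun y => F y + G y).
Proof.
move=> [f1 f2 [K1 hK1]] [g1 g2 [K2 hK2]]; split.
- apply: eq_measurable_fun (measurable_funD f1 g1) => y _; by rewrite ReD.
- apply: eq_measurable_fun (measurable_funD f2 g2) => y _; by rewrite ImD.
- exists (K1 + K2) => y; have [a1 b1] := hK1 y; have [a2 b2] := hK2 y.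
  rewrite ReD ImD; split; apply: le_trans (ler_normD _ _) _; exact: lerD.
Qed.

Lemma good_opp F : good F -> good (fun y => - F y).
Proof.
move=> [f1 f2 [K hK]]; split.
- apply: eq_measurable_fun (measurableT_comp (@oppr_measurable R setT) f1) => y _.
  by rewrite /= ReN.
- apply: eq_measurable_fun (measurableT_comp (@oppr_measurable R setT) f2) => y _.
  by rewrite /= ImN.
- by exists K => y; have [a b] := hK y; rewrite ReN ImN !normrN.
Qed.

Lemma good_sub F G : good F -> good G -> good (fun y => F y - G y).
Proof. move=> hF hG; apply: good_add hF (good_opp hG). Qed.

Lemma good_mul F G : good F -> good G -> good (fun y => F y * G y).
Proof.
move=> [f1 f2 [K1 hK1]] [g1 g2 [K2 hK2]].
have K1p := good_bnd_ge0 hK1; have K2p := good_bnd_ge0 hK2.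
split.
- apply: eq_measurable_fun (measurable_funB (measurable_funM f1 g1) (measurable_funM f2 g2)) => y _.
  by rewrite ReM.
- apply: eq_measurable_fun (measurable_funD (measurable_funM f1 g2) (measurable_funM f2 g1)) => y _.
  by rewrite ImM.
- exists (K1 * K2 + K1 * K2) => y; have [a1 b1] := hK1 y; have [a2 b2] := hK2 y.
  rewrite ReM ImM; split.
    apply: le_trans (ler_normB _ _) _; rewrite !normrM.
    by apply: lerD; apply: ler_pM.
  apply: le_trans (ler_normD _ _) _; rewrite !normrM.
  by apply: lerD; apply: ler_pM.
Qed.

Lemma good_conj F : good F -> good (fun y => (F y)^*).
Proof.
move=> [f1 f2 [K hK]]; split.
- by apply: eq_measurable_fun f1 => y _; rewrite ReJ.
- apply: eq_measurable_fun (measurableT_comp (@oppr_measurable R setT) f2) => y _.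
  by rewrite ImJ.
- exists K => y; have [a b] := hK y; by rewrite ReJ ImJ normrN.
Qed.

Lemma good_sum (I : Type) (r : seq I) (F : I -> R3 R -> C) :
  (forall i, good (F i)) -> good (fun y => \sum_(i <- r) F i y).
Proof.
move=> hF; elim: r => [|a r IH].
  by apply: good_ext (good_cst 0) => y; rewrite big_nil.
by apply: good_ext (good_add (hF a) IH) => y; rewrite big_cons.
Qed.

Lemma mdot (k : R3 R) : measurable_fun setT (fun y : R3 R => dot3 k y).
Proof.
rewrite /dot3.
apply: measurable_funD; [apply: measurable_funD|].
- apply: measurable_funM; first exact: measurable_cst.
  exact: (measurableT_comp measurable_fst measurable_fst).
- apply: measurable_funM; first exact: measurable_cst.
  exact: (measurableT_comp measurable_snd measurable_fst).
- apply: measurable_funM; first exact: measurable_cst.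
  exact: measurable_snd.
Qed.

Lemma mcos (k : R3 R) : measurable_fun setT (fun y : R3 R => cos (dot3 k y)).
Proof.
apply: (measurableT_comp (continuous_measurable_fun (@continuous_cos R))).
exact: mdot.
Qed.

Lemma msin (k : R3 R) : measurable_fun setT (fun y : R3 R => sin (dot3 k y)).
Proof.
apply: (measurableT_comp (continuous_measurable_fun (@continuous_sin R))).
exact: mdot.
Qed.

Lemma good_expi (k : R3 R) : good (fun y => expi (dot3 k y)).
Proof.
split; [exact: mcos | exact: msin |].
by exists 1 => y; rewrite /= cos_max sin_max.
Qed.

Lemma good_expiJ (k : R3 R) : good (fun y => (expi (dot3 k y))^*).
Proof. exact: good_conj (good_expi k). Qed.

End Ana.

Section Ana2.
Variable R : realType.
Local Notation C := R[i].
Local Notation mu := (@leb3 R).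
Local Open Scope classical_set_scope.
Import measurable_realfun.
Variable w : R3 R -> R.
Hypothesis hwint : mu.-integrable setT (EFin \o w).

Lemma bnd_of (T : Type) (h : T -> R) K : (forall x, `|h x| <= K) -> [bounded h x | x in setT].
Proof.
move=> hK; rewrite /bounded_near; near=> M => x _ /=.
apply: le_trans (hK x) _; near: M; apply: nbhs_pinfty_ge; exact: num_real.
Unshelve. all: end_near.
Qed.

Lemma intM (h : R3 R -> R) K :
  measurable_fun setT h -> (forall x, `|h x| <= K) ->
  mu.-integrable setT (EFin \o (fun y => w y * h y)).
Proof.
move=> hm hK.
have := @integrableMl _ _ _ mu setT measurableT _ h hwint.
move=> /(_ _ (bnd_of hK)).
have hm' : measurable_fun (T:= _) setT h by exact: hm.
move=> /(_ hm').
by apply: eq_integrable => //= y _.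
Qed.

Lemma intM' (h : R3 R -> R) K :
  measurable_fun setT h -> (forall x, `|h x| <= K) ->
  mu.-integrable setT (EFin \o (fun y => h y * w y)).
Proof.
move=> hm hK; have := intM hm hK.
by apply: eq_integrable => //= y _; rewrite mulrC.
Qed.

Lemma good_int F : good F -> mu.-integrable setT (EFin \o (fun y => w y * complex.Re (F y))).
Proof. move=> [h1 _ [K hK]]; apply: (intM (K:=K) h1) => y; by case: (hK y). Qed.

Lemma int3_0 : int3 (fun _ : R3 R => 0 : R) = 0.
Proof. by rewrite /int3 Rintegral_cst // mul0r. Qed.

Lemma int_sum (I : Type) (r : seq I) (G : I -> R3 R -> C) :
  (forall i, good (G i)) ->
  int3 (fun y => w y * complex.Re (\sum_(i <- r) G i y)) =
  \sum_(i <- r) int3 (fun y => w y * complex.Re (G i y)).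
Proof.
move=> hG; elim: r => [|a r IH].
  rewrite big_nil -int3_0 /int3; apply: eq_Rintegral => y _.
  by rewrite big_nil mulr0.
rewrite big_cons -IH /int3 -RintegralD //; last 2 first.
- exact: good_int.
- exact: good_int (good_sum _ hG).
apply: eq_Rintegral => y _; by rewrite big_cons ReD mulrDr.
Qed.

Lemma intZ (f : R3 R -> R) (k : R) : mu.-integrable setT (EFin \o f) ->
  mu.-integrable setT (EFin \o (fun x => k * f x)).
Proof.
move=> hf; have := integrableZl measurableT k hf.
by apply: eq_integrable => //= y _.
Qed.

Lemma intD (f g : R3 R -> R) : mu.-integrable setT (EFin \o f) ->
  mu.-integrable setT (EFin \o g) ->
  mu.-integrable setT (EFin \o (fun x => f x + g x)).
Proof.
move=> hf hg; have := integrableD measurableT hf hg.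
by apply: eq_integrable => //= y _.
Qed.

Lemma int_expi (D : C) (th : R3 R) :
  int3 (fun y => w y * complex.Re (D * expi (dot3 th y))) = complex.Re (D * fourier w th).
Proof.
have ic : mu.-integrable setT (EFin \o (fun x => cos (dot3 th x) * w x)).
  by apply: (intM' (mcos th)) => x; exact: cos_max.
have isn : mu.-integrable setT (EFin \o (fun x => sin (dot3 th x) * w x)).
  by apply: (intM' (msin th)) => x; exact: sin_max.
rewrite ReM /fourier /= /int3.
rewrite -(RintegralZl _ measurableT ic) -(RintegralZl _ measurableT isn).
rewrite -RintegralB //; last 2 first.
- exact: intZ.
- exact: intZ.
apply: eq_Rintegral => y _; rewrite ReM /=; ring.
Qed.

End Ana2.

Section Main.
Variables (R : realType) (L Lam : R).
Hypothesis hL : 0 < L.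
Local Notation C := R[i].
Local Notation M := (mode L Lam).
Local Notation cf := (config L Lam).
Local Notation mu := (@leb3 R).
Variable v : M -> C.
Hypothesis hv : forall j, v j != 0.
Variable w : R3 R -> R.
Hypothesis hw0 : forall x, 0 <= w x.
Hypothesis hwint : mu.-integrable setT (EFin \o w).

Lemma expiJM (a b : R) : (expi a)^* * expi b = expi (b - a).
Proof.
rewrite /expi cosB sinB; apply/eqP; rewrite eq_complex /=; apply/andP; split; apply/eqP; ring.
Qed.

Lemma dot3B (k k' y : R3 R) : dot3 (k' - k) y = dot3 k' y - dot3 k y.
Proof. rewrite /dot3 /=; ring. Qed.

Definition Dc (psi : cf -> C) n j j' : C :=
  cc j * cc j' * v j * (v j')^* * (ann j psi n)^* * ann j' psi n.

Lemma P_expand y (t : seq cf) psi :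
  \sum_(n <- t) (Lop v y psi n)^* * Lop v y psi n =
  \sum_(n <- t) \sum_j \sum_j' Dc psi n j j' * expi (dot3 (kmode j' - kmode j) y).
Proof.
apply: eq_bigr => n _.
rewrite LopE rmorph_sum big_distrl /=; apply: eq_bigr => j _.
rewrite big_distrr /=; apply: eq_bigr => j' _.
rewrite rmorphM /= beta_conj dot3B -expiJM /Dc /beta; ring.
Qed.


Lemma good_D psi n j j' : good (fun y => Dc psi n j j' * expi (dot3 (kmode j' - kmode j) y)).
Proof. exact: good_mul (good_cst _) (good_expi _). Qed.

Lemma int_P (t : seq cf) psi :
  int3 (fun y => w y * complex.Re (\sum_(n <- t) (Lop v y psi n)^* * Lop v y psi n)) =
  complex.Re (\sum_(n <- t) \sum_j \sum_j' Dc psi n j j' * fourier w (kmode j' - kmode j)).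
Proof.
transitivity (int3 (fun y => w y * complex.Re (\sum_(n <- t) \sum_j \sum_j'
    Dc psi n j j' * expi (dot3 (kmode j' - kmode j) y)))).
  by rewrite /int3; apply: eq_Rintegral => y _; rewrite P_expand.
rewrite (int_sum hwint) => [|n]; last first.
  by apply: good_sum => j; apply: good_sum => j'; exact: good_D.
rewrite Re_sum; apply: eq_bigr => n _.
rewrite (int_sum hwint) => [|j]; last first.
  by apply: good_sum => j'; exact: good_D.
rewrite Re_sum; apply: eq_bigr => j _.
rewrite (int_sum hwint) => [|j']; last exact: good_D.
rewrite Re_sum; apply: eq_bigr => j' _.
exact: int_expi.
Qed.


Lemma cc_mul (a b : M) : cc a * cc b = ((2 * volume L)^-1)%:C%C *
   (Num.sqrt (norm3 (kmode a)))%:C%C * (Num.sqrt (norm3 (kmode b)))%:C%C.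
Proof.
rewrite /cc -!rmorphM; f_equal.
have hV : 0 < 2 * volume L by rewrite mulr_gt0 // /volume exprn_gt0.
have hs : Num.sqrt (2 * volume L) ^+ 2 = 2 * volume L by rewrite sqr_sqrtr // ltW.
have hs0 : Num.sqrt (2 * volume L) != 0 by rewrite gt_eqF // sqrtr_gt0.
by rewrite mulrACA -invfM -expr2 hs; ring.
Qed.

Lemma sqk (k : R) : 0 <= k -> (Num.sqrt k)%:C%C * (Num.sqrt k)%:C%C = k%:C%C :> C.
Proof. by move=> hk; rewrite -rmorphM -expr2 sqr_sqrtr. Qed.

Lemma norm3_ge0 (k : R3 R) : 0 <= norm3 k.
Proof. exact: sqrtr_ge0. Qed.

Lemma per_n
  (hyp : forall f : M -> C,
     \sum_(j : M) \sum_(j' : M)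
        ((2 * volume L)^-1)%:C%C * (f j)^* * f j'
          * fourier w (kmode j - kmode j')
     <= \sum_(j : M) `|f j| ^+ 2 / `|v j| ^+ 2) psi n :
  \sum_j \sum_j' Dc psi n j j' * fourier w (kmode j' - kmode j) <=
  \sum_j (norm3 (kmode j))%:C%C * ((ann j psi n)^* * ann j psi n).
Proof.
pose g j := (Num.sqrt (norm3 (kmode j)))%:C%C * v j * (ann j psi n)^*.
have gJ j : (g j)^* = (Num.sqrt (norm3 (kmode j)))%:C%C * (v j)^* * ann j psi n.
  by rewrite /g rmorphM /= conjCK rmorphM /= conjR.
have := hyp g.
have -> : \sum_j \sum_j' ((2 * volume L)^-1)%:C%C * (g j)^* * g j' *
     fourier w (kmode j - kmode j') =
   \sum_j \sum_j' Dc psi n j j' * fourier w (kmode j' - kmode j).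
  rewrite [RHS]exchange_big /=; apply: eq_bigr => j _; apply: eq_bigr => j' _.
  rewrite gJ /Dc cc_mul /g; ring.
have -> : \sum_j `|g j| ^+ 2 / `|v j| ^+ 2 =
   \sum_j (norm3 (kmode j))%:C%C * ((ann j psi n)^* * ann j psi n).
  apply: eq_bigr => j _; rewrite !normCK gJ.
  have hvv : v j * (v j)^* != 0 by rewrite mulf_neq0 // conjC_eq0.
  have -> : g j * ((Num.sqrt (norm3 (kmode j)))%:C%C * (v j)^* * ann j psi n) =
     ((Num.sqrt (norm3 (kmode j)))%:C%C * (Num.sqrt (norm3 (kmode j)))%:C%C) *
     ((ann j psi n)^* * ann j psi n) * (v j * (v j)^*) by rewrite /g; ring.
  by rewrite mulfK // sqk // norm3_ge0.
done.
Qed.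


Lemma Hf_eq (s : seq cf) psi : uniq s -> supp s psi ->
  dotF s psi (Hf psi) =
  \sum_(n <- U s) \sum_j (norm3 (kmode j))%:C%C * ((ann j psi n)^* * ann j psi n).
Proof.
move=> us ss.
rewrite /dotF /Hf.
under eq_bigr do rewrite big_distrr /=.
rewrite exchange_big [RHS]exchange_big /=; apply: eq_bigr => j _.
transitivity ((norm3 (kmode j))%:C%C * \sum_(n <- s) (psi n)^* * cre j (ann j psi) n).
  by rewrite big_distrr /=; apply: eq_bigr => n _; ring.
rewrite (cre_adj j us ss (U_uniq s) (suppU_ann j ss)) big_distrr /=.
by apply: eq_bigr.
Qed.

Lemma good_beta j : good (fun y => beta v y j).
Proof. exact: good_mul (good_cst _) (good_expi _). Qed.

Lemma good_Lop (Phi : R3 R -> cf -> C) : (forall m, good (fun y => Phi y m)) ->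
  forall n, good (fun y => Lop v y (Phi y) n).
Proof.
move=> hP n; rewrite /Lop; apply: good_sum => j.
apply: good_mul; first exact: good_mul (good_cst _) (good_expi _).
exact: good_mul (good_cst _) (hP _).
Qed.

Lemma good_Lstar (Phi : R3 R -> cf -> C) : (forall m, good (fun y => Phi y m)) ->
  forall n, good (fun y => Lstar v y (Phi y) n).
Proof.
move=> hP n; rewrite /Lstar; apply: good_sum => j.
apply: good_mul; first exact: good_mul (good_cst _) (good_expiJ _).
exact: good_mul (good_cst _) (hP _).
Qed.

End Main.

Unset Implicit Arguments. Set Strict Implicit.

Theorem corollary1 (R : realType) (L Lam : R) (hL : 0 < L) (hLam : 0 < Lam)
  (v : mode L Lam -> R[i]) (hv : forall j, v j != 0)
  (w : R3 R -> R) (hw0 : forall x, 0 <= w x)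
  (hwint : (@leb3 R).-integrable setT (EFin \o w))
  (hyp : forall f : mode L Lam -> R[i],
     \sum_(j : mode L Lam) \sum_(j' : mode L Lam)
        ((2 * volume L)^-1)%:C%C * (f j)^* * f j'
          * fourier w (kmode j - kmode j')
     <= \sum_(j : mode L Lam) `|f j| ^+ 2 / `|v j| ^+ 2) :
  let c := (2 * volume L)^-1 * \sum_(j : mode L Lam) norm3 (kmode j) * complex.Re (`|v j| ^+ 2) in
  forall (s : seq (config L Lam)) (psi : config L Lam -> R[i]),
    supported_in s psi ->
    (- c * int3 w * complex.Re (dotF s psi psi)
       + 4^-1 * int3 (fun y => w y
            * complex.Re (dotF s psi (opsq (opadd (Lop v y) (Lstar v y)) psi)))
     <= complex.Re (dotF s psi (Hf psi)))
    /\
    (- c * int3 w * complex.Re (dotF s psi psi)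
       - 4^-1 * int3 (fun y => w y
            * complex.Re (dotF s psi (opsq (opsub (Lop v y) (Lstar v y)) psi)))
     <= complex.Re (dotF s psi (Hf psi))).
Proof.
move=> c s psi [us ss].
have hss : supp s psi := ss.
pose P y := \sum_(n <- U s) (Lop v y psi n)^* * Lop v y psi n.
have cE y : cb v y = c%:C%C by exact: (cb_eq v hL y).
have c0 : 0 <= c.
  rewrite /c mulr_ge0 //.
    by rewrite invr_ge0 mulr_ge0 // /volume exprn_ge0 // ltW.
  apply: sumr_ge0 => j _; apply: mulr_ge0; first exact: norm3_ge0.
  exact: (Re_le (exprn_ge0 2 (normr_ge0 (v j)))).
have I0 : 0 <= int3 w by apply: Rintegral_ge0 => x _; exact: hw0.
have N0 : 0 <= complex.Re (dotF s psi psi) by exact: Re_sum_nrm_ge0.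
have NIm : complex.Im (dotF s psi psi) = 0 by exact: Im_sum_nrm.
have key y : complex.Re (dotF s psi (opsq (opadd (Lop v y) (Lstar v y)) psi)) -
             complex.Re (dotF s psi (opsq (opsub (Lop v y) (Lstar v y)) psi)) =
             4 * complex.Re (P y) + 2 * c * complex.Re (dotF s psi psi).
  rewrite -ReB AB_eq // cE ReD Re_natmul ReM NIm mulr0 subr0 Re_natmul.
  by rewrite Re_real.
have A0 y : 0 <= complex.Re (dotF s psi (opsq (opadd (Lop v y) (Lstar v y)) psi)).
  by rewrite A_eq //; exact: Re_sum_nrm_ge0.
have B0 y : complex.Re (dotF s psi (opsq (opsub (Lop v y) (Lstar v y)) psi)) <= 0.
  by rewrite B_eq // ReN oppr_le0; exact: Re_sum_nrm_ge0.
have gA : good (fun y => dotF s psi (opsq (opadd (Lop v y) (Lstar v y)) psi)).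
  rewrite /dotF; apply: good_sum => n; apply: good_mul; first exact: good_cst.
  rewrite /opsq /opadd; apply: good_add.
    apply: good_Lop => m; apply: good_add.
      exact: (good_Lop v (Phi := fun _ => psi) (fun m => good_cst _) _).
    exact: (good_Lstar v (Phi := fun _ => psi) (fun m => good_cst _) _).
  apply: good_Lstar => m; apply: good_add.
    exact: (good_Lop v (Phi := fun _ => psi) (fun m => good_cst _) _).
  exact: (good_Lstar v (Phi := fun _ => psi) (fun m => good_cst _) _).
have gB : good (fun y => dotF s psi (opsq (opsub (Lop v y) (Lstar v y)) psi)).
  rewrite /dotF; apply: good_sum => n; apply: good_mul; first exact: good_cst.
  rewrite /opsq /opsub; apply: good_sub.
    apply: good_Lop => m; apply: good_sub.
      exact: (good_Lop v (Phi := fun _ => psi) (fun m => good_cst _) _).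
    exact: (good_Lstar v (Phi := fun _ => psi) (fun m => good_cst _) _).
  apply: good_Lstar => m; apply: good_sub.
    exact: (good_Lop v (Phi := fun _ => psi) (fun m => good_cst _) _).
  exact: (good_Lstar v (Phi := fun _ => psi) (fun m => good_cst _) _).
have gP : good P.
  apply: good_sum => n; apply: good_mul.
    exact: good_conj (good_Lop v (Phi := fun _ => psi) (fun m => good_cst _) n).
  exact: (good_Lop v (Phi := fun _ => psi) (fun m => good_cst _) n).
have iP := good_int hwint gP.
have iU : (@leb3 R).-integrable setT (EFin \o (fun y => 4 * (w y * complex.Re (P y)) +
            (2 * c * complex.Re (dotF s psi psi)) * w y)).
  exact: intD (intZ _ iP) (intZ _ hwint).
have intU : int3 (fun y => 4 * (w y * complex.Re (P y)) +
            (2 * c * complex.Re (dotF s psi psi)) * w y) =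
            4 * int3 (fun y => w y * complex.Re (P y)) +
            (2 * c * complex.Re (dotF s psi psi)) * int3 w.
  rewrite /int3 RintegralD //; [|exact: intZ|exact: intZ].
  by rewrite !RintegralZl.
have IP : int3 (fun y => w y * complex.Re (P y)) <= complex.Re (dotF s psi (Hf psi)).
  rewrite /P (int_P v hwint) (Hf_eq us hss); apply: Re_le; apply: ler_sum => n _.
  exact (per_n hL hv hyp psi n).
have IA : int3 (fun y => w y * complex.Re (dotF s psi (opsq (opadd (Lop v y) (Lstar v y)) psi)))
   <= 4 * int3 (fun y => w y * complex.Re (P y)) +
            (2 * c * complex.Re (dotF s psi psi)) * int3 w.
  rewrite -intU /int3; apply: le_Rintegral => //.
    exact (good_int hwint gA).
  move=> y _; have := key y; have := B0 y; have := hw0 y; nra.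
have IB : - int3 (fun y => w y * complex.Re (dotF s psi (opsq (opsub (Lop v y) (Lstar v y)) psi)))
   <= 4 * int3 (fun y => w y * complex.Re (P y)) +
            (2 * c * complex.Re (dotF s psi psi)) * int3 w.
  have iB := good_int hwint gB.
  rewrite -intU -mulN1r /int3 -(RintegralZl _ measurableT iB).
  apply: le_Rintegral => //; first exact: intZ.
  move=> y _; have := key y; have := A0 y; have := hw0 y; nra.
have hz : 0 <= c * int3 w * complex.Re (dotF s psi psi) by apply: mulr_ge0 => //; apply: mulr_ge0.
split; nra.
Qed.
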